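(* Let $G$ be a commutative group, $f$ a bijection of $G$, and $Q=G(f)=(G\cup\overline{G},* )$. Then: (i) $Q$ is commutative. (ii) For all $x,y\in G$: $x\backslash y=x^{-1}y$, $x\backslash\overline{y}=\overline{x^{-1}y}$, $\overline{x}\backslash y=\overline{x^{-1}f^{-1}(y)}$, $\overline{x}\backslash\overline{y}=x^{-1}y$. (iii) $G\le N_\mu(Q)$. (iv) $Q$ is a group if and only if $f$ is a translation of $G$, i.e., there is $c\in G$ with $f(x)=xc$ for all $x\in G$. (v) $N_\lambda(Q)\cap G=N_\rho(Q)\cap G=Z(Q)\cap G=\{x\in G:\ f(xy)=xf(y)\text{ for every }y\in G\}$. If $Q$ is not a group (so that $G=N_\mu(Q)$), then $N_\lambda(Q)=N_\rho(Q)=Z(Q)\le G$.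
   Context: A loop is a set with a binary operation and a neutral element $1$ in which all left translations $L_x:y\mapsto xy$ and right translations $R_x:y\mapsto yx$ are bijections; $x\backslash y$ denotes the unique $z$ with $xz=y$. For a loop $Q$: the left nucleus is $N_\lambda(Q)=\{x:(xy)z=x(yz)\ \forall y,z\}$, the middle nucleus is $N_\mu(Q)=\{y:(xy)z=x(yz)\ \forall x,z\}$, the right nucleus is $N_\rho(Q)=\{z:(xy)z=x(yz)\ \forall x,y\}$, and the center $Z(Q)$ is the set of elements lying in all three nuclei and commuting with all elements. Construction $G(f)$: for a commutative group $G$ (written multiplicatively) and a bijection $f:G\to G$, let $\overline{G}=\{\overline{x}:x\in G\}$ be a disjoint copy of $G$, and let $G(f)$ be the set $G\cup\overline{G}$ with multiplication $*$ defined for $x,y\in G$ by $x*y=xy$, $x*\overline{y}=\overline{xy}$, $\overline{x}*y=\overline{xy}$, $\overline{x}*\overline{y}=f(xy)$. It is a loop with neutral element $1$. *)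

(* Defs.v *)
(* The commutative group G is a zmodType (written additively). *)
From HB Require Import structures.
From mathcomp Require Import all_boot all_order all_algebra.
Set Implicit Arguments. Unset Strict Implicit. Unset Printing Implicit Defensive.
Import GRing.Theory.
Local Open Scope ring_scope.

(* Carrier of G(f): G + G, with  inl x  standing for x and  inr x  for \overline{x}. *)
Definition Gf_mul (G : zmodType) (f : G -> G) (a b : G + G) : G + G :=
  match a, b with
  | inl x, inl y => inl (x + y)
  | inl x, inr y => inr (x + y)
  | inr x, inl y => inr (x + y)
  | inr x, inr y => inl (f (x + y))
  end.

Definition lnuc (T : Type) (m : T -> T -> T) (a : T) : Prop :=
  forall y z, m (m a y) z = m a (m y z).
Definition mnuc (T : Type) (m : T -> T -> T) (b : T) : Prop :=
  forall x z, m (m x b) z = m x (m b z).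
Definition rnuc (T : Type) (m : T -> T -> T) (c : T) : Prop :=
  forall x y, m (m x y) c = m x (m y c).
Definition center (T : Type) (m : T -> T -> T) (a : T) : Prop :=
  lnuc m a /\ mnuc m a /\ rnuc m a /\ forall y, m a y = m y a.

Definition is_group (T : Type) (m : T -> T -> T) : Prop :=
  (forall a b c, m (m a b) c = m a (m b c)) /\
  exists e, (forall a, m e a = a /\ m a e = a) /\
            (forall a, exists b, m a b = e /\ m b a = e).

(* Main.v *)
Require Import Defs.
From HB Require Import structures.
From mathcomp Require Import all_boot all_order all_algebra.
Import GRing.Theory.
Local Open Scope ring_scope.
Set Implicit Arguments.

Section S.
Variables (G : zmodType) (f g : G -> G).
Hypotheses (fK : cancel f g) (gK : cancel g f).

Definition T := forall x w : G, f (x + w) = x + f w.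

Lemma T_group : T -> is_group (Gf_mul f).
Proof.
move=> HT; have [k Hf] : exists k, forall y, f y = y + k by exists (f 0) => y; rewrite -HT addr0.
split.
  by case=> a [] b [] c /=; rewrite ?Hf !addrA // (addrAC _ k).
exists (inl 0); split.
  by case=> a /=; rewrite ?add0r ?addr0.
case=> a.
  by exists (inl (- a)); rewrite /= addrN addNr.
exists (inr (g 0 - a)) => /=.
by rewrite addrC subrK gK.
Qed.

Lemma group_T : is_group (Gf_mul f) -> T.
Proof.
case=> A _ x w; have := A (inl x) (inr 0) (inr w).
by rewrite /= !addr0 add0r => -[].
Qed.

Lemma lnucT x : lnuc (Gf_mul f) (inl x) -> forall y, f (x + y) = x + f y.
Proof. by move=> H y; have := H (inr 0) (inr y); rewrite /= !add0r addr0 => -[]. Qed.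
Lemma rnucT x : rnuc (Gf_mul f) (inl x) -> forall y, f (x + y) = x + f y.
Proof. move=> H y; have := H (inr 0) (inr y); rewrite /= !add0r => -[] E. by rewrite addrC -E addrC. Qed.

Lemma Tx_lnuc x : (forall y, f (x + y) = x + f y) -> lnuc (Gf_mul f) (inl x).
Proof. by move=> H [] y [] z /=; rewrite ?addrA // -H addrA. Qed.
Lemma Tx_rnuc x : (forall y, f (x + y) = x + f y) -> rnuc (Gf_mul f) (inl x).
Proof.
move=> H [] y [] z /=; rewrite ?addrA //.
by rewrite [f _ + x]addrC -H addrC.
Qed.

Lemma comm a b : Gf_mul f a b = Gf_mul f b a.
Proof. by case: a b => a [] b /=; rewrite addrC. Qed.

Lemma mnuc_l x : mnuc (Gf_mul f) (inl x).
Proof. by move=> [] y [] z /=; rewrite ?addrA. Qed.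

Lemma mnuc_r b : mnuc (Gf_mul f) (inr b) -> T.
Proof.
move=> H x w; have := H (inl x) (inr (w - b)).
have e : b + (w - b) = w by rewrite addrC subrK.
by rewrite /= -addrA !e => -[].
Qed.

Lemma lnuc_r b : lnuc (Gf_mul f) (inr b) -> T.
Proof.
move=> H x w; have := H (inr (w - b)) (inl x).
have e : b + (w - b) = w by rewrite addrC subrK.
rewrite /= e addrA e => -[] E.
by rewrite addrC -E addrC.
Qed.

Lemma rnuc_r b : rnuc (Gf_mul f) (inr b) -> T.
Proof.
move=> H x w; have := H (inl x) (inr (w - b)).
by rewrite /= -addrA subrK addrC => -[].
Qed.

End S.

Theorem lemma2p1 (G : zmodType) (f g : G -> G)
  (fK : cancel f g) (gK : cancel g f) :
  let m := Gf_mul f in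
  (* (i) *)
  (forall a b, m a b = m b a) /\
  (* (ii) left divisions: z is the unique solution of a * z = b *)
  (forall x y z, m (inl x) z = inl y <-> z = inl (y - x)) /\
  (forall x y z, m (inl x) z = inr y <-> z = inr (y - x)) /\
  (forall x y z, m (inr x) z = inl y <-> z = inr (g y - x)) /\
  (forall x y z, m (inr x) z = inr y <-> z = inl (y - x)) /\
  (* (iii) *)
  (forall x, mnuc m (inl x)) /\
  (* (iv) *)
  (is_group m <-> exists c : G, forall x, f x = x + c) /\
  (* (v) *)
  (forall x,
     (lnuc m (inl x) <-> (forall y, f (x + y) = x + f y)) /\
     (rnuc m (inl x) <-> (forall y, f (x + y) = x + f y)) /\
     (center m (inl x) <-> (forall y, f (x + y) = x + f y))) /\
  (~ is_group m ->
     (forall a, mnuc m a <-> exists x, a = inl x) /\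
     (forall a, lnuc m a <-> rnuc m a) /\
     (forall a, lnuc m a <-> center m a) /\
     (forall a, center m a -> exists x, a = inl x)).
Proof.
move=> m; rewrite {}/m.
have cenx : forall x, center (Gf_mul f) (inl x) <-> (forall y, f (x + y) = x + f y).
  move=> x; split; first by case=> H _; exact: lnucT.
  move=> H; split; first exact: Tx_lnuc.
  split; first exact: mnuc_l.
  split; first exact: Tx_rnuc.
  exact: comm.
split; first exact: comm.
split.
  move=> x y [] z /=; split=> -[] // E; subst; first [by rewrite [in RHS]addrC addKr | by rewrite addrC subrK].
split.
  move=> x y [] z /=; split=> -[] // E; subst; first [by rewrite [in RHS]addrC addKr | by rewrite addrC subrK].
split.
  move=> x y [] z /=; split=> -[] // E; subst;
  first [by rewrite fK [in RHS]addrC addKr | by rewrite addrC subrK gK].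
split.
  move=> x y [] z /=; split=> -[] // E; subst; first [by rewrite [in RHS]addrC addKr | by rewrite addrC subrK].
split; first exact: mnuc_l.
split.
  split.
    move=> /group_T H; exists (f 0) => x; by rewrite -(H x 0) addr0.
  case=> c Hc; apply: (T_group gK); rewrite /T => x w; by rewrite !Hc addrA.
split.
  move=> x; split; [split; [exact: lnucT | exact: Tx_lnuc] |].
  split; [split; [exact: rnucT | exact: Tx_rnuc] | exact: cenx].
move=> NG.
have NT : ~ @T G f by move=> /(T_group gK).
split.
  case=> a; split.
  - by exists a.
  - by move=> _; exact: mnuc_l.
  - by move=> /mnuc_r.
  - by case.
split.
  case=> a; split.
  - by move=> /lnucT /Tx_rnuc.
  - by move=> /rnucT /Tx_lnuc.
  - by move=> /lnuc_r.
  - by move=> /rnuc_r.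
split.
  case=> a; split.
  - by move=> /lnucT /cenx.
  - by case.
  - by move=> /lnuc_r.
  - by case=> /lnuc_r.
case=> a; first by exists a.
by case=> /lnuc_r.
Qed.
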